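(* Let $k,m,t$ be positive integers with $m+t\le k$ and $q$ a prime power. Let $B$ be the bipartite graph with left vertices the $t$-dimensional subspaces $V$ of $\mathbb{F}_q^k$, right vertices the $(m+t)$-dimensional subspaces $X$ of $\mathbb{F}_q^k$, and $V$ adjacent to $X$ iff $V\subseteq X$. For every $(m+t)$-dimensional subspace $X$ fix a bijection $V\mapsto T_{V,X}$ from the $t$-dimensional subspaces of $X$ onto the $m$-dimensional subspaces of $X$ such that $T_{V,X}\oplus V=X$ for every such $V$. For an $m$-dimensional subspace $T$ of $\mathbb{F}_q^k$ let $\mathcal{C}_T=\{\{V,X\}\in E(B): T_{V,X}=T\}$. Then $\mathcal{C}_T$ is an induced matching of $B$ of size $\binom{k-m}{t}_q$.
   Context: $\binom{a}{b}_q$ denotes the Gaussian binomial coefficient (number of $b$-dimensional subspaces of $\mathbb{F}_q^a$). An induced matching of a bipartite graph $B$ is a set $\mathcal{C}\subseteq E(B)$ such that for any two distinct $\{k_1,f_1\},\{k_2,f_2\}\in\mathcal{C}$: $k_1\ne k_2$, $f_1\ne f_2$, and $\{k_1,f_2\},\{k_2,f_1\}\notin E(B)$. *)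

(* Defs.v *)
From HB Require Import structures.
From mathcomp Require Import all_boot all_algebra all_field.
Set Implicit Arguments. Unset Strict Implicit. Unset Printing Implicit Defensive.
Import GRing.Theory.
Local Open Scope ring_scope.

(* Over a finite field, the type of subspaces {vspace vT} is finite:
   equip it with a finType structure (via its canonical matrix representation). *)
Section FinVspace.
Import VectorInternalTheory.
Variables (F : finFieldType) (vT : vectType F).
HB.instance Definition _ := [Countable of {vspace vT} by <:].
HB.instance Definition _ := [Finite of {vspace vT} by <:].
End FinVspace.

Definition gauss_binom (F : finFieldType) (a b : nat) : nat :=
  #|[set U : {vspace 'rV[F]_a} | \dim U == b]|.

Definition induced_matching (S1 S2 : finType) (E C : {set S1 * S2}) : Prop :=
  C \subset E /\
  forall e1 e2, e1 \in C -> e2 \in C -> e1 != e2 ->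
    [/\ e1.1 != e2.1, e1.2 != e2.2, (e1.1, e2.2) \notin E & (e2.1, e1.2) \notin E].

Definition incl_edges (F : finFieldType) (k t m : nat)
  : {set {vspace 'rV[F]_k} * {vspace 'rV[F]_k}} :=
  [set p | [&& \dim p.1 == t, \dim p.2 == (m + t)%N & (p.1 <= p.2)%VS]].

(* Main.v *)
Require Import Defs.
From HB Require Import structures.
From mathcomp Require Import all_boot all_algebra all_field.
Set Implicit Arguments. Unset Strict Implicit. Unset Printing Implicit Defensive.
Import GRing.Theory.
Local Open Scope ring_scope.
Section Quot.
Variables (F : fieldType) (k : nat) (T : {vspace 'rV[F]_k}).

Definition rowc (u : 'rV[F]_k) : 'rV[F]_(\dim T^C) :=
  \row_i coord (vbasis T^C) i u.
Fact rowc_lin : linear rowc.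
Proof. by move=> a w1 w2; apply/rowP=> i; rewrite !mxE linearP. Qed.
HB.instance Definition _ := GRing.isSemilinear.Build F 'rV[F]_k 'rV[F]_(\dim T^C) _ rowc
  (GRing.semilinear_linear rowc_lin).

Definition qf : 'Hom('rV[F]_k, 'rV[F]_(\dim T^C)) := (linfun rowc \o daddv_pi T^C T)%VF.

Lemma qfE v : qf v = rowc (daddv_pi T^C T v).
Proof. by rewrite comp_lfunE lfunE. Qed.

Lemma capCT : (T^C :&: T = 0)%VS.
Proof. by rewrite capvC capv_compl. Qed.

Lemma lker_qf : lker qf = T.
Proof.
apply/vspaceP => v; rewrite memv_ker qfE.
have hadd := daddv_pi_add capCT (w:=v).
rewrite addvC addv_complf memvf in hadd; have {}hadd := hadd isT.
set p := daddv_pi T^C T v in hadd *.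
apply/idP/idP.
- move/eqP=> h0.
  have p0 : p = 0.
    rewrite /p (coord_vbasis (memv_pi T^C T v)); apply: big1 => i _.
    by have := congr1 (fun r : 'rV[F]_(\dim T^C) => r 0 i) h0; rewrite !mxE => ->; rewrite scale0r.
  by rewrite -hadd p0 add0r memv_pi.
- move=> vT.
  have : daddv_pi T T^C v = v by apply: daddv_pi_id => //; exact: capv_compl.
  move=> e; rewrite e in hadd.
  have -> : p = 0 by apply: (addIr v); rewrite add0r.
  by rewrite linear0.
Qed.

Lemma limg_qf : limg qf = fullv.
Proof.
apply/eqP; rewrite eqEsubv subvf /=; apply/subvP => r _.
set u := \sum_i r 0 i *: (vbasis (T^C)%VS)`_i.
have uU : u \in (T^C)%VS.
  by apply: rpred_sum => j _; rewrite rpredZ ?vbasis_mem ?memt_nth.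
have -> : r = qf u.
  rewrite qfE daddv_pi_id //; last exact: capCT.
  apply/rowP=> i; rewrite mxE /u coord_sum_free ?(basis_free (vbasisP _)) //.
exact: memv_img (memvf u).
Qed.

End Quot.
Section Count.
Variables (F : fieldType) (k : nat) (T : {vspace 'rV[F]_k}).
Local Notation f := (qf T).

Lemma dim_img X : (T <= X)%VS -> (\dim T + \dim (f @: X))%N = \dim X.
Proof.
by move=> TX; rewrite -(limg_ker_dim f X) lker_qf (capv_idPr TX).
Qed.

Lemma T_pre W : (T <= f @^-1: W)%VS.
Proof. by rewrite -{1}(lker_qf T) -lpreim0 lpreimS // sub0v. Qed.

Lemma img_pre W : (f @: (f @^-1: W))%VS = W.
Proof. by rewrite lpreimK // limg_qf subvf. Qed.

Lemma dim_pre W : \dim (f @^-1: W) = (\dim T + \dim W)%N.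
Proof. by rewrite -(dim_img (T_pre W)) img_pre. Qed.

Lemma pre_img X : (T <= X)%VS -> (f @^-1: (f @: X))%VS = X.
Proof.
move=> TX; apply/eqP; rewrite eq_sym eqEdim dim_pre dim_img // leqnn andbT.
by apply/subvP => x xX; rewrite -memv_preim memv_img.
Qed.
End Count.

Lemma card_sup (F : finFieldType) k (T : {vspace 'rV[F]_k}) d :
  #|[set X : {vspace 'rV[F]_k} | (\dim X == (\dim T + d)%N) && (T <= X)%VS]|
  = #|[set W : {vspace 'rV[F]_(\dim T^C)} | \dim W == d]|.
Proof.
rewrite -(card_in_imset (f := fun X => (qf T @: X)%VS)).
  congr #|pred_of_set _|; apply/setP => W; rewrite inE.
  apply/imsetP/idP.
  - case=> X; rewrite inE => /andP[/eqP dX TX] ->.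
    by rewrite -(eqn_add2l (\dim T)) dim_img // dX.
  - move=> /eqP dW; exists (qf T @^-1: W)%VS; last by rewrite img_pre.
    by rewrite inE dim_pre dW eqxx T_pre.
move=> X1 X2; rewrite !inE => /andP[_ T1] /andP[_ T2] e.
by rewrite -(pre_img T1) e pre_img.
Qed.
Unset Implicit Arguments. Set Strict Implicit. Set Printing Implicit Defensive.

Theorem lemma6 (F : finFieldType) (k m t : nat)
  (k_gt0 : (0 < k)%N) (m_gt0 : (0 < m)%N) (t_gt0 : (0 < t)%N)
  (mtk : (m + t <= k)%N)
  (TT : {vspace 'rV[F]_k} -> {vspace 'rV[F]_k} -> {vspace 'rV[F]_k})
  (hT_compl : forall X V, \dim X = (m + t)%N -> \dim V = t -> (V <= X)%VS ->
      [/\ (TT V X <= X)%VS, \dim (TT V X) = m,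
          directv (TT V X + V) & (TT V X + V)%VS = X])
  (hT_inj : forall X V1 V2, \dim X = (m + t)%N ->
      \dim V1 = t -> (V1 <= X)%VS -> \dim V2 = t -> (V2 <= X)%VS ->
      TT V1 X = TT V2 X -> V1 = V2)
  (hT_surj : forall X U, \dim X = (m + t)%N -> \dim U = m -> (U <= X)%VS ->
      exists V, [/\ \dim V = t, (V <= X)%VS & TT V X = U])
  (T : {vspace 'rV[F]_k}) (dimT : \dim T = m) :
  let C := [set p in incl_edges F k t m | TT p.1 p.2 == T] in
  induced_matching (incl_edges F k t m) C /\ #|C| = gauss_binom F (k - m) t.
Proof.
move=> C.
have memE : forall V X, ((V, X) \in incl_edges F k t m) =
   [&& \dim V == t, \dim X == (m + t)%N & (V <= X)%VS].
  by move=> V X; rewrite /incl_edges inE.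
have memC : forall V X, ((V, X) \in C) =
   [&& \dim V == t, \dim X == (m + t)%N, (V <= X)%VS & TT V X == T].
  by move=> V X; rewrite /C inE memE -!andbA.
have TX : forall V X, (V, X) \in C -> (T <= X)%VS.
  move=> V X; rewrite memC => /and4P[/eqP dV /eqP dX VX /eqP <-].
  by case: (hT_compl X V dX dV VX).
have K : forall V1 X1 X2, (V1, X1) \in C -> (T <= X2)%VS ->
    \dim X2 = (m + t)%N -> (V1 <= X2)%VS -> X1 = X2.
  move=> V1 X1 X2 hC TX2 dX2 VX2; move: hC; rewrite memC.
  move=> /and4P[/eqP dV /eqP dX VX /eqP eT].
  case: (hT_compl X1 V1 dX dV VX) => _ _ _; rewrite eT => <-.
  apply/eqP; rewrite eqEdim subv_add TX2 VX2 /= dX2.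
  by case: (hT_compl X1 V1 dX dV VX) => _ _ _; rewrite eT => ->; rewrite dX.
split.
  split; first by apply/subsetP => p; rewrite /C inE => /andP[].
  move=> [V1 X1] [V2 X2] h1 h2 hne /=.
  have h1' := h1; have h2' := h2.
  move: h1' h2'; rewrite !memC => /and4P[/eqP dV1 /eqP dX1 VX1 /eqP e1]
    /and4P[/eqP dV2 /eqP dX2 VX2 /eqP e2].
  have nX : X1 != X2.
    apply/eqP => eX; move/eqP: hne; apply; subst X2; congr (_, _).
    by apply: (hT_inj X1) => //; rewrite e1 e2.
  have nV : V1 != V2.
    apply/eqP => eV; subst V2; move/eqP: nX; apply.
    exact: (K V1 X1 X2 h1 (TX _ _ h2) dX2 VX2).
  split => //.
  - rewrite memE dV1 dX2 !eqxx /=; apply/negP => VX.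
    by move/eqP: nX; apply; exact: (K V1 X1 X2 h1 (TX _ _ h2) dX2 VX).
  - rewrite memE dV2 dX1 !eqxx /=; apply/negP => VX.
    by move/eqP: nX; apply; symmetry; exact: (K V2 X2 X1 h2 (TX _ _ h1) dX1 VX).
have -> : #|C| = #|[set X : {vspace 'rV[F]_k} | (\dim X == (\dim T + t)%N) && (T <= X)%VS]|.
  rewrite -(card_in_imset (f := snd) (D := C)).
    congr #|pred_of_set _|; apply/setP => X; rewrite inE dimT.
    apply/imsetP/idP.
    - case=> [[V X']] hC /= ->; rewrite (TX _ _ hC) andbT.
      by move: hC; rewrite memC => /and4P[_ /eqP -> _ _].
    - move=> /andP[/eqP dX TX2].
      have [V [dV VX eV]] := hT_surj X T dX dimT TX2.
      by exists (V, X) => //; rewrite memC dV dX VX eV !eqxx.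
  move=> [V1 X1] [V2 X2] h1 h2 /= eX; subst X2.
  move: h1 h2; rewrite !memC => /and4P[/eqP dV1 /eqP dX1 VX1 /eqP e1]
    /and4P[/eqP dV2 _ VX2 /eqP e2].
  by congr (_, _); apply: (hT_inj X1) => //; rewrite e1 e2.
rewrite card_sup.
have -> : \dim (T^C)%VS = (k - m)%N.
  rewrite dimv_compl dimvf dim_matrix dimT.
  by rewrite GRing.mul1r.
by [].
Qed.
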